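(* Consider the $\mathrm{AND}$ instance with $n$ variables: $f(x)=\bigwedge_{i=1}^n x_i$, the input $x$ uniform on $\{0,1\}^n$, and costs $(c_1,\dots,c_n)$ a uniformly random permutation of $\{1,\dots,n\}$. Then the offline benchmark satisfies $\mathrm{opt}^{\mathrm{avg}}_0=O(1)$, while every zero-error online algorithm has expected cost $\Omega(n)$ on this instance.
   Context: Online priced query model: $f$ is given; the input and the costs are unknown; the algorithm maintains investments $\theta$ (initially $0$), each step increasing one coordinate by a positive amount; $x_i$ is revealed once $\theta_i\ge c_i$; cost is $\|\theta\|_1$ at halting. Offline algorithms know the costs and pay $c_i$ to reveal $x_i$. Zero-error means the output always equals $f(x)$. Expected costs (and $\mathrm{opt}^{\mathrm{avg}}_0$, the optimal expected cost of a zero-error offline algorithm) are taken over the random input, the random costs, and the algorithm's randomness; the implied constants are absolute. *)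

(* Defs.v *)
From HB Require Import structures.
From mathcomp Require Import all_boot all_order all_algebra all_fingroup.
From mathcomp Require Import all_classical all_reals all_analysis.
Set Implicit Arguments. Unset Strict Implicit. Unset Printing Implicit Defensive.
Import Order.TTheory GRing.Theory Num.Theory.
Local Open Scope ring_scope.

Definition input (n : nat) := {ffun 'I_n -> bool}.
Definition obs (n : nat) := {ffun 'I_n -> option bool}.

Definition AND (n : nat) (x : input n) : bool := [forall i, x i].

(** Costs (c_1,...,c_n) given by a permutation s of {1..n}: c_i = s(i)+1
    (ordinals are 0-based). *)
Definition perm_costs (R : realType) (n : nat) (s : {perm 'I_n}) : 'I_n -> R :=
  fun i => ((s i : nat).+1)%:R.

Definition avg_xs (R : realType) (n : nat) (F : input n -> {perm 'I_n} -> R) : R :=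
  (\sum_(x : input n) \sum_(s : {perm 'I_n}) F x s)
    / (#|{: input n}| * #|{: {perm 'I_n}}|)%:R.

(** A (deterministic) online algorithm sees the whole history of observations
    (revealed values after each step) and either halts with an output or
    increases the investment of one coordinate by an amount d (which must be
    positive; a non-positive step is an invalid move and makes the run fail). *)
Inductive online_action (R : Type) (n : nat) :=
| OnHalt of bool
| OnInvest of 'I_n & R.

Definition online_alg (R : realType) (n : nat) := seq (obs n) -> online_action R n.

Definition revealed (R : realType) (n : nat) (x : input n) (c : 'I_n -> R)
  (th : {ffun 'I_n -> R}) : obs n :=
  [ffun i => if c i <= th i then Some (x i) else None].

Fixpoint online_run (R : realType) (n : nat) (A : online_alg R n) (x : input n)
  (c : 'I_n -> R) (k : nat) (th : {ffun 'I_n -> R}) (h : seq (obs n))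
  : option (bool * R) :=
  match k with
  | 0 => None
  | k'.+1 =>
    match A h with
    | OnHalt b => Some (b, \sum_i th i)
    | OnInvest i d =>
      if 0 < d then
        let th' : {ffun 'I_n -> R} :=
          [ffun j => if j == i then th j + d else th j] in
        online_run A x c k' th' (rcons h (revealed x c th'))
      else None
    end
  end.

Definition online_outcome (R : realType) (n : nat) (A : online_alg R n)
  (x : input n) (c : 'I_n -> R) (k : nat) : option (bool * R) :=
  online_run A x c k [ffun => 0] [:: revealed x c [ffun => 0]].

Definition online_zero_error (R : realType) (n : nat) (A : online_alg R n) : Prop :=
  forall (x : input n) (s : {perm 'I_n}),
    exists k v, online_outcome A x (perm_costs R s) k = Some (AND x, v).

(** Cost ||theta||_1 at halting (the run is deterministic, so this is the
    unique such value when the algorithm halts). *)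
Definition online_cost (R : realType) (n : nat) (A : online_alg R n)
  (x : input n) (c : 'I_n -> R) : R :=
  xget 0 [set v | exists k b, online_outcome A x c k = Some (b, v)].

Definition online_avg_cost (R : realType) (n : nat) (A : online_alg R n) : R :=
  avg_xs (fun x s => online_cost A x (perm_costs R s)).

Inductive offline_action (n : nat) :=
| OffHalt of bool
| OffQuery of 'I_n.

Definition offline_alg (R : realType) (n : nat) :=
  ('I_n -> R) -> seq (obs n) -> offline_action n.

Fixpoint offline_run (R : realType) (n : nat) (A : offline_alg R n) (x : input n)
  (c : 'I_n -> R) (k : nat) (rev : obs n) (spent : R) (h : seq (obs n))
  : option (bool * R) :=
  match k with
  | 0 => None
  | k'.+1 =>
    match A c h with
    | OffHalt b => Some (b, spent)
    | OffQuery i =>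
      let rev' : obs n := [ffun j => if j == i then Some (x j) else rev j] in
      offline_run A x c k' rev' (spent + c i) (rcons h rev')
    end
  end.

Definition offline_outcome (R : realType) (n : nat) (A : offline_alg R n)
  (x : input n) (c : 'I_n -> R) (k : nat) : option (bool * R) :=
  offline_run A x c k [ffun => None] 0 [:: [ffun => None]].

Definition offline_zero_error (R : realType) (n : nat) (A : offline_alg R n) : Prop :=
  forall (x : input n) (s : {perm 'I_n}),
    exists k v, offline_outcome A x (perm_costs R s) k = Some (AND x, v).

Definition offline_cost (R : realType) (n : nat) (A : offline_alg R n)
  (x : input n) (c : 'I_n -> R) : R :=
  xget 0 [set v | exists k b, offline_outcome A x c k = Some (b, v)].

Definition offline_avg_cost (R : realType) (n : nat) (A : offline_alg R n) : R :=
  avg_xs (fun x s => offline_cost A x (perm_costs R s)).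

(* Main.v *)
Require Import Defs.
From HB Require Import structures.
From mathcomp Require Import all_boot all_order all_algebra all_fingroup.
From mathcomp Require Import all_classical all_reals all_analysis.
From mathcomp Require Import zify ring lra.
Import Order.TTheory GRing.Theory Num.Theory.
Local Open Scope ring_scope.

Lemma online_run_mono {R : realType} {n} {A : online_alg R n} {x c k th h r} :
  online_run A x c k th h = Some r ->
  forall k', (k <= k')%N -> online_run A x c k' th h = Some r.
Proof.
elim: k th h => [//|k IH] th h /= H [//|k'] /=; rewrite ltnS => hk.
move: H; case: (A h) => // i d; case: ifP => // _ /IH; apply; done.
Qed.

Lemma online_run_uniq {R : realType} {n} {A : online_alg R n} {x c k k' th h r r'} :
  online_run A x c k th h = Some r -> online_run A x c k' th h = Some r' -> r = r'.
Proof.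
move=> H1 H2; have := online_run_mono H1 _ (leq_maxl k k').
by rewrite (online_run_mono H2 _ (leq_maxr k k')); case.
Qed.

Lemma online_run_ge {R : realType} {n} {A : online_alg R n} {x c k th h b v} :
  online_run A x c k th h = Some (b, v) -> \sum_i th i <= v.
Proof.
elim: k th h => [//|k IH] th h /=.
case: (A h) => [b' [_ <-] //| i d]; case: ifP => // d0 /IH.
apply: le_trans; apply: ler_sum => j _; rewrite ffunE.
by case: eqP => // _; rewrite lerDl ltW.
Qed.

Lemma online_cost_eq {R : realType} {n} {A : online_alg R n} {x c k b v} :
  online_outcome A x c k = Some (b, v) -> online_cost A x c = v.
Proof.
move=> H; apply: xget_unique; first by exists k, b.
by move=> y [k' [b' H']]; have := online_run_uniq H' H; case.
Qed.

Lemma offline_run_mono {R : realType} {n} {A : offline_alg R n} {x c k rv sp h r} :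
  offline_run A x c k rv sp h = Some r ->
  forall k', (k <= k')%N -> offline_run A x c k' rv sp h = Some r.
Proof.
elim: k rv sp h => [//|k IH] rv sp h /= H [//|k'] /=; rewrite ltnS => hk.
move: H; case: (A c h) => // i /IH; apply; done.
Qed.

Lemma offline_cost_eq {R : realType} {n} {A : offline_alg R n} {x c k b v} :
  offline_outcome A x c k = Some (b, v) -> offline_cost A x c = v.
Proof.
move=> H; apply: xget_unique; first by exists k, b.
move=> y [k' [b' H']].
move: H' => /offline_run_mono /(_ (maxn k k') (leq_maxr _ _)).
by move: H => /offline_run_mono /(_ (maxn k k') (leq_maxl _ _)) -> [].
Qed.
Lemma perm_count_aux n (i : 'I_n) (P : pred 'I_n) :
  #|[set s : {perm 'I_n} | P (s i)]| = (#|[set k | P k]| * #|[set s : {perm 'I_n} | s i == i]|)%N.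
Proof.
have N0 k k' : (#|[set s : {perm 'I_n} | s i == k]| <= #|[set s : {perm 'I_n} | s i == k']|)%N.
  rewrite -(card_imset _ (mulIg (tperm k k'))); apply: subset_leq_card.
  apply/fintype.subsetP => t /imsetP [s]; rewrite inE => /eqP si ->.
  by rewrite inE permM si tpermL.
rewrite -[LHS]sum1dep_card (partition_big (fun s : {perm _} => s i) P) //=.
rewrite -sum_nat_const [RHS](eq_bigl P); last by move=> k; rewrite inE.
apply: eq_bigr => k Pk; rewrite (eq_bigl (fun s : {perm 'I_n} => s i == k)).
  by rewrite sum1dep_card; apply/eqP; rewrite eqn_leq !N0.
by move=> s; case: (s i =P k) => [->|_]; rewrite ?Pk ?andbF ?eqxx.
Qed.

Lemma perm_count n (i : 'I_n) (P : pred 'I_n) :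
  (#|[set s : {perm 'I_n} | P (s i)]| * n = #|[set k | P k]| * #|{: {perm 'I_n}}|)%N.
Proof.
have -> : #|{: {perm 'I_n}}| = #|[set s : {perm 'I_n} | predT (s i)]|.
  by apply: eq_card => s; rewrite inE.
rewrite !perm_count_aux.
have -> : #|[set k : 'I_n | predT k]| = n by rewrite cardsT card_ord.
by rewrite -mulnA (mulnC n).
Qed.
Lemma card_le_real (R : realType) n (th : R) : 0 <= th ->
  (#|[set k : 'I_n | (k.+1)%:R <= th]|)%:R <= th.
Proof.
move=> th0; set K := [set k : 'I_n | (k.+1)%:R <= th].
have [->|[k0 k0K]] := set_0Vmem K; first by rewrite cards0.
case: (@arg_maxnP _ k0 (mem K) (fun k : 'I_n => (k : nat)) k0K) => km kmK kmax.
have : (#|K| <= km.+1)%N.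
  rewrite cardE -(size_map val) -(size_iota 0 km.+1).
  apply: uniq_leq_size; first by rewrite map_inj_uniq ?enum_uniq //; apply: val_inj.
  move=> j /mapP [k kK ->]; rewrite mem_iota /= ltnS.
  by apply: kmax; move: kK; rewrite mem_enum.
move=> hle; apply: le_trans (_ : (km.+1)%:R <= th).
  by rewrite ler_nat.
move: kmK. rewrite /mem /= /K inE. done.
Qed.
Lemma union_bound (T I : finType) (P : I -> pred T) :
  (#|[set s | [exists i, P i s]]| <= \sum_i #|[set s | P i s]|)%N.
Proof.
rewrite -sum1dep_card big_mkcond /=.
under [X in (_ <= X)%N]eq_bigr => i _ do rewrite -sum1dep_card big_mkcond /=.
rewrite exchange_big /=; apply: leq_sum => s _.
case: ifP => // /existsP [i Pi].
by rewrite (bigD1 i) //= Pi.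
Qed.
Definition Rset {R : realType} {n} (th : 'I_n -> R) : {set {perm 'I_n}} :=
  [set s | [exists i, perm_costs R s i <= th i]].

Lemma Rset_bound (R : realType) n (th : 'I_n -> R) : (0 < n)%N -> (forall i, 0 <= th i) ->
  (#|Rset th|)%:R <= (#|{: {perm 'I_n}}|)%:R / n%:R * \sum_i th i.
Proof.
move=> n0 th0.
apply: le_trans (_ : ((\sum_i #|[set s : {perm _} | (perm_costs R s i <= th i)%R]|)%N)%:R <= _).
  by rewrite ler_nat union_bound.
rewrite natr_sum mulr_sumr; apply: ler_sum => i _.
have := @perm_count n i (fun k : 'I_n => (k.+1)%:R <= th i).
move=> /(congr1 (fun m : nat => (m%:R : R))); rewrite !natrM => E.
have -> : #|[set s : {perm 'I_n} | perm_costs R s i <= th i]| = #|[set s : {perm 'I_n} | (s i).+1%:R <= th i]| by [].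
rewrite (_ : (#|[set s : {perm 'I_n} | (s i).+1%:R <= th i]|%:R : R) = #|[set k : 'I_n | (k.+1)%:R <= th i]|%:R * #|{: {perm 'I_n}}|%:R / n%:R); last first.
  by rewrite -E mulfK // pnatr_eq0 -lt0n.
rewrite -mulrA [X in _ <= X]mulrC; apply: ler_wpM2r.
  by rewrite divr_ge0.
exact: card_le_real.
Qed.
Definition none_obs n : obs n := [ffun => None].

Definition Sset {R : realType} {n} (A : online_alg R n) (x x' : input n) k
  (th : {ffun 'I_n -> R}) h (t : R) : {set {perm 'I_n}} :=
  [set s | (s \notin Rset th) && `[< exists b v b' v',
     online_run A x (perm_costs R s) k th h = Some (b, v) /\ v < t /\
     online_run A x' (perm_costs R s) k th h = Some (b', v') /\ b != b' >]].

Lemma revealed_none {R : realType} {n} (x : input n) (s : {perm 'I_n}) (th : {ffun 'I_n -> R}) :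
  s \notin Rset th -> revealed x (perm_costs R s) th = none_obs n.
Proof.
rewrite inE negb_exists => /forallP H; apply/ffunP => i; rewrite !ffunE.
by rewrite (negbTE (H i)).
Qed.

Lemma set0_if {T : finType} (S : {set T}) : (forall s, s \in S -> False) -> S = finset.set0.
Proof. by move=> H; apply/setP => s; rewrite inE; apply/negP => /H. Qed.

Lemma claim (R : realType) n (A : online_alg R n) (x x' : input n) : (0 < n)%N ->
  forall k (th : {ffun 'I_n -> R}) (h : seq (obs n)) (t : R), (forall i, 0 <= th i) -> \sum_i th i <= t ->
  ((#|Sset A x x' k th h t| + #|Rset th|)%N)%:R
    <= (#|{: {perm 'I_n}}|)%:R / n%:R * t.
Proof.
move=> n0 k; elim: k => [|k IH] th h t th0 tht.
  have -> : Sset A x x' 0 th h t = finset.set0.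
    by apply: set0_if => s; rewrite inE => /andP [_ /asboolP [b [v [b' [v' [H _]]]]]].
  rewrite cards0 add0n. apply: le_trans (@Rset_bound R n th n0 th0) _.
  by apply: ler_wpM2l => //; rewrite divr_ge0.
have base : Sset A x x' k.+1 th h t = finset.set0 ->
    ((#|Sset A x x' k.+1 th h t| + #|Rset th|)%N)%:R
    <= (#|{: {perm 'I_n}}|)%:R / n%:R * t.
  move=> ->; rewrite cards0 add0n; apply: le_trans (@Rset_bound R n th n0 th0) _.
  by apply: ler_wpM2l => //; rewrite divr_ge0.
case E: (A h) => [b0 | i d].
  apply: base; apply: set0_if => s; rewrite inE => /andP [_ /asboolP [b [v [b' [v' [H1 [_ [H2 bb']]]]]]]].
  by move: H1 H2 bb'; rewrite /= E => -[<- _] [<- _]; rewrite eqxx.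
case: (ltrP 0 d) => d0; last first.
  apply: base; apply: set0_if => s; rewrite inE => /andP [_ /asboolP [b [v [b' [v' []]]]]].
  by rewrite /= E ltNge d0.
set th' : {ffun 'I_n -> R} := [ffun j => if j == i then th j + d else th j].
have step y s : online_run A y (perm_costs R s) k.+1 th h =
    online_run A y (perm_costs R s) k th' (rcons h (revealed y (perm_costs R s) th')).
  by rewrite /= E d0.
have thth' j : th j <= th' j.
  by rewrite ffunE; case: eqP => // _; rewrite lerDl ltW.
have th'0 j : 0 <= th' j by apply: le_trans (thth' j).
have Rsub : Rset th \subset Rset th'.
  apply/fintype.subsetP => s; rewrite !inE => /existsP [j hj]; apply/existsP; exists j.
  exact: le_trans hj (thth' j).
case: (lerP (\sum_i th' i) t) => ht'; last first.
  apply: base; apply: set0_if => s; rewrite inE => /andP [_ /asboolP [b [v [b' [v' []]]]]].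
  rewrite step => /online_run_ge H [vt _].
  by move: (le_lt_trans H vt); rewrite ltNge (ltW ht').
have IH' := IH th' (rcons h (none_obs n)) t th'0 ht'.
apply: le_trans IH'; rewrite ler_nat.
have disj : [disjoint Sset A x x' k.+1 th h t & Rset th].
  rewrite -setI_eq0; apply/eqP; apply: set0_if => s; rewrite !inE => /andP [/andP [+ _]].
  by move=> /negP H /H.
move: (leq_card_setU (Sset A x x' k.+1 th h t) (Rset th)).2; rewrite disj => /eqP <-.
apply: leq_trans (leq_card_setU _ _); apply: subset_leq_card.
apply/fintype.subsetP => s; rewrite !finset.in_setU => /orP [|hs]; last first.
  by rewrite (fintype.subsetP Rsub s hs) orbT.
rewrite inE => /andP [_ /asboolP [b [v [b' [v' []]]]]].
rewrite !step => H1 [vt [H2 bb']].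
case hR: (s \in Rset th'); first by rewrite orbT.
rewrite !revealed_none ?hR // in H1 H2.
apply/orP; left; rewrite inE hR /=.
by apply/asboolP; exists b, v, b', v'.
Qed.
Lemma perm_costs_ge1 (R : realType) n (s : {perm 'I_n}) i : 1 <= perm_costs R s i.
Proof. by rewrite /perm_costs ler1n. Qed.

Lemma Rset0 (R : realType) n (s : {perm 'I_n}) : s \notin Rset ([ffun => 0] : {ffun 'I_n -> R}).
Proof.
rewrite inE negb_exists; apply/forallP => i; rewrite ffunE -ltNge.
exact: lt_le_trans ltr01 (@perm_costs_ge1 R _ s i).
Qed.

Lemma online_x_bound (R : realType) n (A : online_alg R n) : (0 < n)%N ->
  online_zero_error A -> forall x : input n,
  n%:R / 4 * (#|{: {perm 'I_n}}|)%:R <= \sum_s online_cost A x (perm_costs R s).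
Proof.
move=> n0 zA x.
pose x' : input n := if AND x then [ffun => false] else [ffun => true].
have hAND : AND x != AND x'.
  have a1 : AND ([ffun => false] : input n) = false.
    by apply/negbTE/forallPn; exists (Ordinal n0); rewrite ffunE.
  have a2 : AND ([ffun => true] : input n) = true by apply/forallP => i; rewrite ffunE.
  by rewrite /x'; case: (AND x); rewrite ?a1 ?a2.
have [kf Hk] := choice (fun s => zA x s).
have [kf' Hk'] := choice (fun s => zA x' s).
pose K := (\max_s (kf s + kf' s))%N.
have HK y (kg : {perm 'I_n} -> nat) s : (kg s <= kf s + kf' s)%N ->
   (exists v, online_outcome A y (perm_costs R s) (kg s) = Some (AND y, v)) ->
   exists v, online_outcome A y (perm_costs R s) K = Some (AND y, v).
  move=> hle [v Hv]; exists v; apply: (online_run_mono Hv).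
  by apply: leq_trans hle _; apply: (leq_bigmax_cond s).
pose t : R := n%:R / 2.
pose N : R := (#|{: {perm 'I_n}}|)%:R.
pose T := [set s : {perm 'I_n} | online_cost A x (perm_costs R s) < t].
have cost0 s : 0 <= online_cost A x (perm_costs R s).
  have [v Hv] := Hk s; rewrite (online_cost_eq Hv).
  by have := online_run_ge Hv; rewrite big1 // => i _; rewrite ffunE.
have TS : T \subset Sset A x x' K [ffun => 0] [:: none_obs n] t.
  apply/fintype.subsetP => s; rewrite inE => hs; rewrite inE Rset0 /=.
  have [v Hv] := HK x kf s (leq_addr _ _) (Hk s).
  have [v' Hv'] := HK x' kf' s (leq_addl _ _) (Hk' s).
  apply/asboolP; exists (AND x), v, (AND x'), v'.
  rewrite (online_cost_eq Hv) in hs.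
  move: Hv Hv'; rewrite /online_outcome !revealed_none ?Rset0 // => Hv Hv'.
have hT : (#|T|)%:R <= N / 2.
  have := @claim R n A x x' n0 K [ffun => 0] [:: none_obs n] t.
  rewrite big1 => [H|i _]; last by rewrite ffunE.
  have {H} H := H (fun i => ltac:(by rewrite ffunE)) (ltac:(by rewrite divr_ge0)).
  apply: le_trans (_ : ((#|Sset A x x' K [ffun => 0%R] [:: none_obs n] t| + #|Rset ([ffun => 0%R] : {ffun 'I_n -> R})|)%N)%:R <= _).
    by rewrite ler_nat; apply: leq_trans (subset_leq_card TS) (leq_addr _ _).
  apply: le_trans H _; rewrite /t /N mulrA mulfVK ?pnatr_eq0 -?lt0n //.
have : \sum_s (t - (if s \in T then t else 0)) <= \sum_s online_cost A x (perm_costs R s).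
  apply: ler_sum => s _; case: ifP; rewrite ?subrr // inE => /negbT; rewrite -leNgt subr0 //.
apply: le_trans.
rewrite sumrB -big_mkcond /= !sumr_const -![t *+ _]mulr_natr.
rewrite (_ : #|xpredT|%:R = N); last by rewrite /N cardT.
have tT : t * #|T|%:R <= t * (N / 2) by apply: ler_wpM2l => //; rewrite /t divr_ge0.
apply: le_trans (lerB (lexx _) tT); rewrite /t.
rewrite (_ : n%:R / 2 * N - n%:R / 2 * (N / 2) = n%:R / 4 * N); first by [].
by field.
Qed.
Lemma online_cost_ge0 (R : realType) n (A : online_alg R n) : online_zero_error A ->
  forall x s, 0 <= online_cost A x (perm_costs R s).
Proof.
move=> zA x s; have [k [v Hv]] := zA x s; rewrite (online_cost_eq Hv).
by have := online_run_ge Hv; rewrite big1 // => i _; rewrite ffunE.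
Qed.

Lemma online_avg_bound (R : realType) n (A : online_alg R n) : online_zero_error A ->
  n%:R / 4 <= online_avg_cost A.
Proof.
move=> zA.
have xb x : n%:R / 4 * (#|{: {perm 'I_n}}|)%:R <= \sum_s online_cost A x (perm_costs R s).
  case: (posnP n) => [n0|n0]; last exact: online_x_bound.
  have -> : n%:R / 4 = 0 :> R by rewrite n0 mul0r.
  rewrite mul0r; apply: sumr_ge0 => s _; exact: online_cost_ge0.
rewrite /online_avg_cost /avg_xs ler_pdivlMr; last first.
  rewrite ltr0n muln_gt0; apply/andP; split; apply/card_gt0P.
    by exists ([ffun => true] : input n).
  by exists (1%g : {perm 'I_n}).
apply: le_trans (_ : \sum_(x : input n) (n%:R / 4 * (#|{: {perm 'I_n}}|)%:R) <= _); last first.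
  by apply: ler_sum => x _; exact: xb.
rewrite sumr_const -[_ *+ #|_|]mulr_natr natrM mulrA cardT -cardE (mulrAC _ (#|input n|%:R)).
by [].
Qed.
Lemma part2 (R : realType) :
  (exists c : R, 0 < c /\
     forall (n : nat) (d : measure_display) (Omega : measurableType d)
            (P : probability Omega R) (A : Omega -> online_alg R n),
       (forall w, online_zero_error (A w)) ->
       (forall (x : input n) (s : {perm 'I_n}),
          measurable_fun setT (fun w => online_cost (A w) x (perm_costs R s))) ->
       ((c * n%:R)%:E <= \int[P]_w (online_avg_cost (A w))%:E)%E).
Proof.
exists (1/4); split; first by rewrite divr_gt0.
move=> n d Omega P A zA mA.
have -> : 1/4 * n%:R = n%:R / 4 :> R by rewrite mulrC div1r.
rewrite -[X in (X <= _)%E]mule1 -(probability_setT P) -integral_cst //.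
apply: ge0_le_integral => //.
- by move=> w _; rewrite lee_fin divr_ge0.
- apply/measurable_realfun.measurable_EFinP; rewrite /online_avg_cost /avg_xs.
  apply: (@measurable_realfun.measurable_funM _ _ _ _ (fun w => \sum_x \sum_s online_cost (A w) x (perm_costs R s)) (cst _)); last exact: measurable_cst.
  apply: measurable_sum => x; apply: measurable_sum => s; exact: mA.
- by move=> w _; rewrite lee_fin; apply: online_avg_bound.
Qed.
Lemma card_ord_lt n j : (j <= n)%N -> #|[set k : 'I_n | (k < j)%N]| = j.
Proof.
move=> jn.
have -> : [set k : 'I_n | (k < j)%N] = [set widen_ord jn k | k : 'I_j].
  apply/setP => k; rewrite inE; apply/idP/imsetP => [kj|[k' _ ->]].
    by exists (Ordinal kj) => //; apply: val_inj.
  by rewrite /= ltn_ord.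
by rewrite card_imset ?card_ord //; by move=> a b /(congr1 val) /= /val_inj.
Qed.

Lemma card_good n (s : {perm 'I_n}) (j : nat) : (j <= n)%N ->
  #|[set x : input n | [forall i, (s i < j)%N ==> x i]]| = (2 ^ (n - j))%N.
Proof.
move=> jn.
have -> : #|[set x : input n | [forall i, (s i < j)%N ==> x i]]| =
    #|pffun_on true [pred i : 'I_n | ~~ (s i < j)%N] (predT : pred bool)|.
  apply: eq_card => x; rewrite inE; apply/forallP/familyP => H i; have := H i;
    rewrite /= ?inE; case: (s i < j)%N => //=; by case: (x i).
rewrite card_pffun_on.
have -> : #|(predT : pred bool)| = 2%N by rewrite cardT enumT unlock.
congr (_ ^ _)%N.
have := cardC [pred i : 'I_n | (s i < j)%N]; rewrite card_ord.
have -> : #|[pred i : 'I_n | (s i < j)%N]| = j.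
  rewrite (_ : #|[pred i : 'I_n | (s i < j)%N]| = #|s @^-1: [set k : 'I_n | (k < j)%N]|); last first.
    by apply: eq_card => i; rewrite !inE.
  by rewrite card_preimset ?card_ord_lt //; exact: perm_inj.
move=> E.
rewrite (_ : #|[pred i : 'I_n | ~~ (s i < j)%N]| = #|[predC [pred i : 'I_n | (s i < j)%N]]|); last first.
  by apply: eq_card => i; rewrite !inE.
rewrite -[X in (_ = (X - j)%N)]E addKn; by apply: eq_card => i; rewrite !inE.
Qed.

Lemma sum_geom n : (\sum_(j < n) j.+1 * 2 ^ (n - j) + 2 * n + 4 = 2 ^ n.+2)%N.
Proof.
elim: n => [|n IH]; first by rewrite big_ord0.
rewrite big_ord_recr /= subSn // subnn expn1.
rewrite (eq_bigr (fun j : 'I_n => 2 * (j.+1 * 2 ^ (n - j)))%N); last first.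
  by move=> j _; rewrite /= subSn ?(ltnW (ltn_ord j)) // expnS mulnCA.
rewrite -big_distrr /= [(2 ^ n.+3)%N]expnS -IH.
set S := (\sum_(j < n) j.+1 * 2 ^ (n - j))%N. clearbody S; lia.
Qed.
Definition offA (R : realType) n : offline_alg R n := fun c h =>
  let r := last [ffun => None] h in
  if [exists i, r i == Some false] then @OffHalt n false
  else if [pick i | c i == ((size h).-1).+1%:R] is Some i then OffQuery i
  else @OffHalt n true.

Definition revm {n} (x : input n) (s : {perm 'I_n}) (m : nat) : obs n :=
  [ffun j => if (s j < m)%N then Some (x j) else None].

Definition goodF (R : realType) {n} (x : input n) (s : {perm 'I_n}) (j : nat) : R :=
  if [forall i, (s i < j)%N ==> x i] then (j.+1)%:R else 0.

Lemma goodF_ge0 (R : realType) n x s j : 0 <= @goodF R n x s j.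
Proof. by rewrite /goodF; case: ifP. Qed.

Lemma off_run (R : realType) n (x : input n) (s : {perm 'I_n}) :
  forall k m (h : seq (obs n)), (m <= n)%N -> (n - m < k)%N -> size h = m.+1 ->
  last [ffun => None] h = revm x s m ->
  exists v, offline_run (offA R n) x (perm_costs R s) k (revm x s m)
     (\sum_(j < m) goodF R x s j) h = Some (AND x, v) /\
     v <= \sum_(j < n) goodF R x s j.
Proof.
elim=> [|k IH] m h mn mk hs hl; first by rewrite ltn0 in mk.
rewrite /= {1}/offA hl.
have sumle : \sum_(j < m) goodF R x s j <= \sum_(j < n) goodF R x s j.
  rewrite (big_ord_widen n (goodF R x s) mn) [X in X <= _]big_mkcond /=.
  by apply: ler_sum => j _; case: ifP => // _; apply: goodF_ge0.
case: ifP => [/existsP [i /eqP]|/negbT nf].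
  rewrite ffunE; case: ifP => // si [xi].
  exists (\sum_(j < m) goodF R x s j); split=> //.
  congr (Some (_, _)); apply/esym/negbTE/forallPn; exists i; by rewrite xi.
have good : [forall i, (s i < m)%N ==> x i].
  apply/forallP => i; apply/implyP => si; move: nf; rewrite negb_exists => /forallP /(_ i).
  by rewrite ffunE si; case: (x i).
rewrite hs /=.
case: pickP => [i /eqP ci | none].
  have si : s i = m :> nat.
    by move: ci; rewrite /perm_costs => /eqP; rewrite eqr_nat eqSS => /eqP.
  have mn' : (m < n)%N by rewrite -si ltn_ord.
  have [v [Hv vle]] := IH m.+1 (rcons h (revm x s m.+1)) mn' (ltac:(lia)) (ltac:(by rewrite size_rcons hs)) (ltac:(by rewrite last_rcons)).
  exists v; split=> //.
  rewrite -Hv; congr (offline_run _ _ _ _ _ _ _).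
  - apply/ffunP => j; rewrite !ffunE; case: (j =P i) => [->|ji]; first by rewrite si ltnSn.
    rewrite ltnS [(nat_of_ord (s j) <= m)%N]leq_eqVlt; case: ((s j : nat) =P m) => [sj|_] //=.
    by exfalso; rewrite -si in sj; apply: ji; apply: perm_inj; exact: ord_inj sj.
  - by rewrite big_ord_recr /= /goodF good ci.
  - congr rcons; apply/ffunP => j; rewrite !ffunE; case: (j =P i) => [->|ji]; first by rewrite si ltnSn.
    rewrite ltnS [(nat_of_ord (s j) <= m)%N]leq_eqVlt; case: ((s j : nat) =P m) => [sj|_] //=.
    by exfalso; rewrite -si in sj; apply: ji; apply: perm_inj; exact: ord_inj sj.
have mn' : m = n.
  apply/eqP; rewrite eqn_leq mn /=; rewrite leqNgt; apply/negP => mlt.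
  have := none (s^-1%g (Ordinal mlt)); rewrite /perm_costs permKV /= eqxx //.
subst m.
exists (\sum_(j < n) goodF R x s j); split=> //.
congr (Some (_, _)); apply/esym/forallP => i.
by move/forallP: good => /(_ i); rewrite ltn_ord.
Qed.
Lemma off_outcome (R : realType) n (x : input n) (s : {perm 'I_n}) :
  exists v, offline_outcome (offA R n) x (perm_costs R s) n.+1 = Some (AND x, v) /\
     v <= \sum_(j < n) goodF R x s j.
Proof.
have r0 : revm x s 0 = [ffun => None] by apply/ffunP => j; rewrite !ffunE ltn0.
have := @off_run R n x s n.+1 0 [:: [ffun => None]] (leq0n n) (ltac:(lia)) erefl (esym r0).
by rewrite r0 big_ord0.
Qed.

Lemma card_input n : #|{: input n}| = (2 ^ n)%N.
Proof. by rewrite card_ffun card_bool card_ord. Qed.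

Lemma off_sum_x (R : realType) n (s : {perm 'I_n}) :
  \sum_(x : input n) offline_cost (offA R n) x (perm_costs R s) <= 4 * (2 ^ n)%:R.
Proof.
apply: le_trans (_ : \sum_(x : input n) \sum_(j < n) goodF R x s j <= _).
  apply: ler_sum => x _; have [v [Hv vle]] := @off_outcome R n x s.
  by rewrite (offline_cost_eq Hv).
rewrite exchange_big /=.
apply: le_trans (_ : \sum_(j < n) ((j.+1 * 2 ^ (n - j))%N)%:R <= _).
  apply: ler_sum => j _; rewrite /goodF -big_mkcond /= sumr_const.
  rewrite (_ : #|_| = #|[set x : input n | [forall i, (s i < j)%N ==> x i]]|); last first.
    by apply: eq_card => x; rewrite !inE.
  by rewrite card_good 1?ltnW // natrM mulr_natr.
rewrite -natr_sum -natrM ler_nat.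
have := sum_geom n; rewrite expnS expnS; set S := (\sum_(j < n) _)%N; clearbody S => E.
apply: (@leq_trans (S + 2 * n + 4)); first by rewrite -addnA leq_addr.
by rewrite E mulnA.
Qed.
Lemma part1 (R : realType) :
  exists C : R, forall n : nat,
     exists A : offline_alg R n, offline_zero_error A /\ offline_avg_cost A <= C.
Proof.
exists 4 => n; exists (offA R n); split.
  move=> x s; have [v [Hv _]] := @off_outcome R n x s; by exists n.+1, v.
rewrite /offline_avg_cost /avg_xs ler_pdivrMr; last first.
  rewrite ltr0n muln_gt0; apply/andP; split; apply/card_gt0P.
    by exists ([ffun => true] : input n).
  by exists (1%g : {perm 'I_n}).
rewrite exchange_big /=.
apply: le_trans (_ : \sum_(s : {perm 'I_n}) (4 * (2 ^ n)%:R) <= _).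
  by apply: ler_sum => s _; apply: off_sum_x.
rewrite sumr_const card_input natrM -[_ *+ #|_|]mulr_natr mulrA.
by rewrite cardT -cardE.
Qed.

Theorem mainTheorem11 (R : realType) :
  (exists C : R, forall n : nat,
     exists A : offline_alg R n, offline_zero_error A /\ offline_avg_cost A <= C)
  /\
  (exists c : R, 0 < c /\
     forall (n : nat) (d : measure_display) (Omega : measurableType d)
            (P : probability Omega R) (A : Omega -> online_alg R n),
       (forall w, online_zero_error (A w)) ->
       (forall (x : input n) (s : {perm 'I_n}),
          measurable_fun setT (fun w => online_cost (A w) x (perm_costs R s))) ->
       ((c * n%:R)%:E <= \int[P]_w (online_avg_cost (A w))%:E)%E).
Proof. split; [exact: part1 | exact: part2]. Qed.
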